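(* Suppose that $n=m$ and $W=(w_{ij})\in(\mathbb{R}_{>0})^{n\times n}$ is symmetric. (a) The following recursion holds: $$T^{n,n}(W) = R^{n,n}_n \begin{pmatrix} \left[ R^{n,n-1}_n \begin{pmatrix} T^{n-1,n-1}(W_{n-1,n-1}) \\ w_{1n}\ \ldots\ w_{n-1,n} \end{pmatrix} \right]^t \\ w_{1n}\ \ldots\ w_{nn} \end{pmatrix} .$$ Moreover, if $(s_{ij})$ denote the elements of the $(n-1)\times n$ matrix $S=\left[ R^{n,n-1}_n \begin{pmatrix} T^{n-1,n-1}(W_{n-1,n-1})\\ w_{1n}\ \ldots\ w_{n-1,n} \end{pmatrix} \right]^t$ and $(t_{ij})$ the elements of $T^{n,n}(W)$, then $t_{ij}=s_{ij}$ for $1\le i<j\le n$, $t_{11}=s_{12}/(2s_{11})$, $t_{ii}=s_{i,i+1}s_{i-1,i}/s_{ii}$ for $2\le i\le n-1$, and $t_{nn}=2s_{n-1,n}w_{nn}$. (b) For $n\ge 1$, $$4^{\lfloor n/2\rfloor} \prod_{i=1}^n w_{ii} = \frac{\prod_{j=0}^{\lfloor\frac{n-1}2\rfloor} t_{n-2j, \,n-2j}}{\prod_{j=0}^{\lfloor\frac{n-2}2\rfloor} t_{n-1-2j,\, n-1-2j}} = \frac{\prod_{i\ \mathrm{odd}} z_{ni}}{\prod_{i\ \mathrm{even}} z_{ni}},$$ where $z_{ni}=t_{n-i+1,n-i+1}$, $1\le i\le n$.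
   Context: For $n,m\ge1$ and $X=(x_{ij})\in(\mathbb{R}_{>0})^{n\times m}$, define local moves: for $2\le i\le n$, $2\le j\le m$, $l_{ij}$ replaces the submatrix $\begin{pmatrix} x_{i-1,j-1}& x_{i-1,j}\\ x_{i,j-1}& x_{ij}\end{pmatrix}=\begin{pmatrix} a& b\\ c& d\end{pmatrix}$ by $\begin{pmatrix} bc/(ab+ac) & b\\ c& d(b+c) \end{pmatrix}$; $l_{i1}$ replaces $x_{i1}$ by $x_{i-1,1}x_{i1}$; $l_{1j}$ replaces $x_{1j}$ by $x_{1,j-1}x_{1j}$; $l_{11}$ is the identity. Set $\pi^j_i=l_{ij}\circ\cdots\circ l_{i1}$ and $R^{n,m}_i=\pi_1^{m-i+1}\circ\cdots\circ\pi^m_i$ if $i\le m$, $R^{n,m}_i=\pi^1_{i-m+1}\circ\cdots\circ\pi^m_i$ if $i\ge m$ (maps on $(\mathbb{R}_{>0})^{n\times m}$). The geometric RSK map is $T^{n,m}=R^{n,m}_n\circ\cdots\circ R^{n,m}_1$. $W_{k,k}=(w_{ij},1\le i,j\le k)$, and $M^t$ denotes transpose. The $z_{ni}$ are the bottom-row (shape) entries of the pattern $P$ associated with $T^{n,n}(W)$. *)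

(* Defs.v *)
(* Geometric RSK (O'Connell--Seppalainen--Zygouras local moves). *)
From HB Require Import structures.
From mathcomp Require Import all_boot all_order all_algebra.
Set Implicit Arguments. Unset Strict Implicit. Unset Printing Implicit Defensive.
Import Order.TTheory GRing.Theory Num.Theory.
Local Open Scope ring_scope.

Section GRSK.
Variable R : realFieldType.

Definition get {n m : nat} (X : 'M[R]_(n, m)) (p q : nat) : R :=
  match (insub p : option 'I_n), (insub q : option 'I_m) with
  | Some a, Some b => X a b
  | _, _ => 0
  end.

(* 1-indexed entry x_{ij}, as in the paper. *)
Definition ent {n m : nat} (X : 'M[R]_(n, m)) (i j : nat) : R := get X i.-1 j.-1.

Definition lmove {n m : nat} (i j : nat) (X : 'M[R]_(n, m)) : 'M[R]_(n, m) :=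
  \matrix_(a < n, b < m)
    let x := ent X in
    let a' := (a : nat).+1 in let b' := (b : nat).+1 in
    if (2 <= i)%N && (2 <= j)%N then
      if (a' == i.-1) && (b' == j.-1) then
        x i.-1 j * x i j.-1 / (x i.-1 j.-1 * x i.-1 j + x i.-1 j.-1 * x i j.-1)
      else if (a' == i) && (b' == j) then x i j * (x i.-1 j + x i j.-1)
      else X a b
    else if (2 <= i)%N && (j == 1%N) then
      if (a' == i) && (b' == 1%N) then x i.-1 1%N * x i 1%N else X a b
    else if (i == 1%N) && (2 <= j)%N then
      if (a' == 1%N) && (b' == j) then x 1%N j.-1 * x 1%N j else X a b
    else X a b.

(* pi^j_i = l_{ij} o ... o l_{i1}  (l_{i1} applied first). *)
Definition gpi {n m : nat} (i j : nat) (X : 'M[R]_(n, m)) : 'M[R]_(n, m) :=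
  foldl (fun Y k => lmove i k Y) X (iota 1 j).

(* R^{n,m}_i = pi^{m-min(i,m)+1}_{i-min(i,m)+1} o ... o pi^m_i
   (pi^m_i applied first); this covers both cases i <= m and i >= m. *)
Definition gR {n m : nat} (i : nat) (X : 'M[R]_(n, m)) : 'M[R]_(n, m) :=
  foldl (fun Y k => gpi (i - k) (m - k) Y) X (iota 0 (minn i m)).

(* T^{n,m} = R^{n,m}_n o ... o R^{n,m}_1  (R_1 applied first). *)
Definition gT {n m : nat} (X : 'M[R]_(n, m)) : 'M[R]_(n, m) :=
  foldl (fun Y i => gR i Y) X (iota 1 n).

Definition ulblock {n m : nat} (p q : nat) (X : 'M[R]_(n, m)) : 'M[R]_(p, q) :=
  \matrix_(a < p, b < q) get X a b.

(* Stack the matrix A (first rows) over the row r (1-indexed entries r 1 .. r q),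
   producing a p' x q matrix; used with p' = p + 1. *)
Definition stack_row {p q : nat} (p' : nat) (A : 'M[R]_(p, q)) (r : nat -> R)
  : 'M[R]_(p', q) :=
  \matrix_(a < p', b < q) if (a < p)%N then get A a b else r (b : nat).+1.

Definition zshape {n : nat} (W : 'M[R]_n) (i : nat) : R :=
  ent (gT W) (n - i + 1)%N (n - i + 1)%N.

End GRSK.

(* Main.v *)
Require Import Defs.
From HB Require Import structures.
From mathcomp Require Import all_boot all_order all_algebra.
From mathcomp Require Import zify ring lra.
From Stdlib Require Import FunctionalExtensionality.
Import Order.TTheory GRing.Theory Num.Theory.
Local Open Scope ring_scope.

Set Implicit Arguments. Unset Strict Implicit. Unset Printing Implicit Defensive.

Lemma eq_foldl_aux (A B : Type) (g h : A -> B -> A) a s :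
  (forall a x, g a x = h a x) -> foldl g a s = foldl h a s.
Proof. by move=> H; elim: s a => //= x s IH a; rewrite H IH. Qed.

Lemma foldl_mapX (A B C : Type) (g : A -> B -> A) (h : C -> B) a s :
  foldl g a (map h s) = foldl (fun a x => g a (h x)) a s.
Proof. by elim: s a => //= x s IH a. Qed.

Lemma foldl_flattenX (A B C : Type) (g : A -> B -> A) (F : C -> seq B) a s :
  foldl g a (flatten (map F s)) = foldl (fun a x => foldl g a (F x)) a s.
Proof. by elim: s a => //= x s IH a; rewrite foldl_cat IH. Qed.

Lemma sorted_catX (T : eqType) (r : rel T) s1 s2 :
  sorted r s1 -> sorted r s2 -> (forall x y, x \in s1 -> y \in s2 -> r x y) ->
  sorted r (s1 ++ s2).
Proof.
case: s1 => [|x s1] //= Hs1 Hs2 H.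
elim: s1 x Hs1 H => [|y s1 IH] x /=.
  move=> _ H; case: s2 Hs2 H => [|z s2] //= Hs2 H.
  by rewrite Hs2 andbT H // ?inE ?eqxx.
move=> /andP[rxy Hp] H; rewrite rxy /=; apply: IH => // a b Ha Hb.
by apply: H => //; rewrite inE Ha orbT.
Qed.

Lemma sorted_flattenX (I T : eqType) (ri : rel I) (r : rel T) (F : I -> seq T) s :
  transitive ri -> sorted ri s -> (forall i, i \in s -> sorted r (F i)) ->
  (forall i j, ri i j -> forall x y, x \in F i -> y \in F j -> r x y) ->
  sorted r (flatten (map F s)).
Proof.
move=> tri; elim: s => [|i s IH] //= Hs HF Hr.
apply: sorted_catX.
- by apply: HF; rewrite inE eqxx.
- apply: IH => //; first by apply: path_sorted Hs.
  by move=> j Hj; apply: HF; rewrite inE Hj orbT.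
move=> x y Hx /flattenP[l /mapP[j Hj ->] Hy].
have := order_path_min tri Hs => /allP/(_ j Hj) rij.
exact: Hr rij _ _ Hx Hy.
Qed.

Lemma sorted_cat_rel (T : eqType) (r : rel T) s1 s2 :
  sorted r (s1 ++ s2) -> transitive r -> forall y z, y \in s1 -> z \in s2 -> r y z.
Proof.
elim: s1 => [|a s1 IH] //= Hs tr y z; rewrite inE => /orP[/eqP->|ys1] zs2.
  by have := order_path_min tr Hs => /allP; apply; rewrite mem_cat zs2 orbT.
by apply: IH => //; apply: path_sorted Hs.
Qed.

Lemma foldl_commute_front (T : eqType) (A : Type) (M : T -> A -> A) x u a :
  (forall y, y \in u -> forall a, M x (M y a) = M y (M x a)) ->
  M x (foldl (fun a y => M y a) a u) = foldl (fun a y => M y a) (M x a) u.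
Proof.
elim: u a => [|y u IH] a //= H.
rewrite IH; last by move=> z Hz; apply: H; rewrite inE Hz orbT.
by rewrite H // inE eqxx.
Qed.

Lemma foldl_trace (T : eqType) (A : Type) (M : T -> A -> A) (dep r1 r2 : rel T)
   (s1 s2 : seq T) (a : A) :
  {in s1 &, forall x y, ~~ dep x y -> forall a, M x (M y a) = M y (M x a)} ->
  transitive r1 -> transitive r2 -> irreflexive r2 ->
  sorted r1 s1 -> sorted r2 s2 -> uniq s2 -> perm_eq s1 s2 ->
  {in s1 &, forall x y, dep x y -> r1 x y -> r2 x y} ->
  foldl (fun a x => M x a) a s1 = foldl (fun a x => M x a) a s2.
Proof.
move=> Hc tr1 tr2 ir2.
elim: s1 s2 a Hc => [|x s1 IH] s2 a Hc Hs1 Hs2 Hu Hp Hd.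
  by rewrite perm_sym in Hp; move/perm_nilP: Hp => ->.
have xs2 : x \in s2 by rewrite -(perm_mem Hp) inE eqxx.
pose i := index x s2.
have E : s2 = take i s2 ++ x :: drop i.+1 s2.
  by rewrite -{1}(cat_take_drop i s2) (drop_nth x) ?index_mem // nth_index.
set u := take i s2 in E; set v := drop i.+1 s2 in E.
have Hu' := Hu; rewrite E cat_uniq /= in Hu'.
case/and4P: Hu' => uu /norP[xu _] _ uv.
have xnu : x \notin u by [].
have Hp2 : perm_eq s1 (u ++ v).
  rewrite -(perm_cons x); apply: (perm_trans Hp); rewrite E.
  by rewrite -cat1s perm_catCA.
have us1 : forall y, y \in u -> y \in s1.
  move=> y yu; have : y \in x :: s1 by rewrite (perm_mem Hp) E mem_cat yu.
  rewrite inE => /orP[/eqP yx|//]; by rewrite -yx yu in xnu.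
rewrite [in RHS]E foldl_cat /= (@foldl_commute_front _ _ M x u); last first.
  move=> y yu b; apply: Hc; first exact: mem_head.
    by rewrite inE (us1 y yu) orbT.
  apply/negP => dxy.
  have r1xy : r1 x y.
    by have := order_path_min tr1 Hs1 => /allP/(_ y (us1 y yu)).
  have yxs : y \in x :: s1 by rewrite inE (us1 y yu) orbT.
  have r2xy := Hd x y (mem_head _ _) yxs dxy r1xy.
  have r2yx : r2 y x.
    by move: Hs2; rewrite E => /sorted_cat_rel; apply => //; rewrite mem_head.
  by have := ir2 y; rewrite (tr2 _ _ _ r2yx r2xy).
rewrite -foldl_cat; apply: IH => //.
- by move=> y z yi zi; apply: Hc; rewrite inE ?yi ?zi orbT.
- exact: path_sorted Hs1.
- apply: (@subseq_sorted _ r2 tr2 (u ++ v) s2) => //; rewrite E; apply: cat_subseq => //.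
  exact: subseq_cons.
- by move: Hu; rewrite E !cat_uniq /= => /and3P[-> /norP[_ ->] /andP[_ ->]].
- by move=> y z yi zi; apply: Hd; rewrite inE ?yi ?zi orbT.
Qed.


Section F.
Variable R : realFieldType.
Definition fn := nat -> nat -> R.

Definition fl (i j : nat) (f : fn) : fn := fun p q =>
    if (2 <= i)%N && (2 <= j)%N then
      if (p == i.-1) && (q == j.-1) then
        f i.-1 j * f i j.-1 / (f i.-1 j.-1 * f i.-1 j + f i.-1 j.-1 * f i j.-1)
      else if (p == i) && (q == j) then f i j * (f i.-1 j + f i j.-1)
      else f p q
    else if (2 <= i)%N && (j == 1%N) then
      if (p == i) && (q == 1%N) then f i.-1 1%N * f i 1%N else f p q
    else if (i == 1%N) && (2 <= j)%N then
      if (p == 1%N) && (q == j) then f 1%N j.-1 * f 1%N j else f p q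
    else f p q.

Lemma entE n m (X : 'M[R]_(n, m)) p q (Hp : (p.-1 < n)%N) (Hq : (q.-1 < m)%N) :
  ent X p q = X (Ordinal Hp) (Ordinal Hq).
Proof.
rewrite /ent /get (insubT (fun k => k < n)%N Hp) (insubT (fun k => k < m)%N Hq).
by congr (X _ _); apply: val_inj.
Qed.

Lemma ent_lmove n m (X : 'M[R]_(n, m)) i j p q :
  (0 < p <= n)%N -> (0 < q <= m)%N -> ent (lmove i j X) p q = fl i j (ent X) p q.
Proof.
move=> /andP[p0 pn] /andP[q0 qm].
have Hp : (p.-1 < n)%N by lia.
have Hq : (q.-1 < m)%N by lia.
rewrite (entE _ Hp Hq) /lmove mxE /= (prednK p0) (prednK q0) /fl.
by rewrite -(entE X Hp Hq).
Qed.


Lemma fl_frame i j (f : fn) p q :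
  ~~ ((p == i) && (q == j)) -> ~~ ((p == i.-1) && (q == j.-1)) -> fl i j f p q = f p q.
Proof.
move=> H1 H2; rewrite /fl (negbTE H2) (negbTE H1).
case: ifP => _ //; case: ifP => [/andP[_ /eqP j1]|_].
  by subst j; rewrite (negbTE H1).
by case: ifP => [/andP[/eqP i1 _]|//]; subst i; rewrite (negbTE H1).
Qed.

Lemma fl_local i j (f g : fn) p q :
  (forall a b, (a == i.-1) || (a == i) -> (b == j.-1) || (b == j) -> f a b = g a b) ->
  f p q = g p q -> fl i j f p q = fl i j g p q.
Proof.
move=> H Hpq; rewrite /fl.
have E1 : f i.-1 j = g i.-1 j by apply: H; rewrite eqxx ?orbT.
have E2 : f i j.-1 = g i j.-1 by apply: H; rewrite eqxx ?orbT.
have E3 : f i.-1 j.-1 = g i.-1 j.-1 by apply: H; rewrite eqxx ?orbT.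
have E4 : f i j = g i j by apply: H; rewrite eqxx ?orbT.
rewrite E1 E2 E3 E4 Hpq.
case: ifP => _ //; case: ifP => [/andP[ _ /eqP j1]|_].
  by rewrite -j1 E1 E4.
by case: ifP => [/andP[/eqP i1 _]|//]; rewrite -i1 E2 E4.
Qed.


Definition depm (a b c d : nat) : bool :=
  [&& (a <= c.+1)%N, (c <= a.+1)%N, (b <= d.+1)%N, (d <= b.+1)%N,
      ~~ ((c == a.+1) && (d.+1 == b)) & ~~ ((a == c.+1) && (b.+1 == d))].

Lemma fl_comm_half i j i' j' (f : fn) p q :
  (0 < i)%N -> (0 < j)%N -> (0 < i')%N -> (0 < j')%N -> ~~ depm i j i' j' ->
  ((p == i) && (q == j)) || ((p == i.-1) && (q == j.-1)) ->
  fl i j (fl i' j' f) p q = fl i' j' (fl i j f) p q.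
Proof.
move=> i0 j0 i0' j0' nd W1.
have nW : forall a b, (a == i.-1) || (a == i) -> (b == j.-1) || (b == j) ->
   ~~ ((a == i') && (b == j')) && ~~ ((a == i'.-1) && (b == j'.-1)).
  by move: nd; rewrite /depm => nd a b; lia.
rewrite [RHS]fl_frame; first last.
- by case/andP: (nW p q ltac:(lia) ltac:(lia)).
- by case/andP: (nW p q ltac:(lia) ltac:(lia)).
apply: fl_local.
  by move=> a b Ha Hb; case/andP: (nW a b Ha Hb) => h1 h2; rewrite fl_frame.
by case/andP: (nW p q ltac:(lia) ltac:(lia)) => h1 h2; rewrite fl_frame.
Qed.

Lemma depm_sym a b c d : depm a b c d = depm c d a b.
Proof. rewrite /depm; apply/idP/idP; lia. Qed.

Lemma fl_comm i j i' j' (f : fn) :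
  (0 < i)%N -> (0 < j)%N -> (0 < i')%N -> (0 < j')%N -> ~~ depm i j i' j' ->
  fl i j (fl i' j' f) = fl i' j' (fl i j f).
Proof.
move=> i0 j0 i0' j0' nd; apply: functional_extensionality => p.
apply: functional_extensionality => q.
case W1: (((p == i) && (q == j)) || ((p == i.-1) && (q == j.-1))).
  exact: fl_comm_half.
case W2: (((p == i') && (q == j')) || ((p == i'.-1) && (q == j'.-1))).
  by symmetry; apply: fl_comm_half => //; rewrite depm_sym.
rewrite fl_frame; try lia. rewrite fl_frame; try lia.
rewrite fl_frame; try lia. by rewrite fl_frame; try lia.
Qed.

Definition flipF (f : fn) : fn := fun p q => f q p.

Lemma flip_fl i j f : flipF (fl i j f) = fl j i (flipF f).
Proof.
apply: functional_extensionality => p; apply: functional_extensionality => q.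
rewrite /flipF /fl.
case: (boolP (2 <= i)%N) => i2; case: (boolP (2 <= j)%N) => j2 /=.
- rewrite [(q == _) && _]andbC [(p == j) && _]andbC.
  case: ifP => _; first by rewrite [_ * f _ j.-1]mulrC [_ + f i.-1 j.-1 * f i j.-1]addrC.
  by case: ifP => _ //; rewrite addrC.
- case: (boolP (j == 1%N)) => [/eqP j1|jn1] /=; first by rewrite andbC.
  by rewrite !andbF.
- rewrite andbT andbF; case: ifP => _ //; by rewrite andbC.
- by rewrite !andbF.
Qed.


Definition appl (A : Type) (M : nat -> nat -> A -> A) (L : seq (nat * nat)) (a : A) :=
  foldl (fun a x => M x.1 x.2 a) a L.
Definition mpi (i j : nat) := [seq (i, c) | c <- iota 1 j].
Definition mR (m i : nat) := flatten [seq mpi (i - k) (m - k) | k <- iota 0 (minn i m)].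
Definition mT (n m : nat) := flatten [seq mR m i | i <- iota 1 n].

Lemma appl_cat A M L1 L2 (a : A) : appl M (L1 ++ L2) a = appl M L2 (appl M L1 a).
Proof. by rewrite /appl foldl_cat. Qed.

Lemma gT_appl n m (X : 'M[R]_(n, m)) : gT X = appl (@lmove R n m) (mT n m) X.
Proof.
rewrite /gT /appl /mT foldl_flattenX; apply: eq_foldl_aux => Y i.
rewrite /gR /mR foldl_flattenX; apply: eq_foldl_aux => Z k.
by rewrite /gpi /mpi foldl_mapX.
Qed.

Definition agree n m (f g : fn) :=
  forall p q, (0 < p <= n)%N -> (0 < q <= m)%N -> f p q = g p q.

Definition inbox n m (L : seq (nat * nat)) :=
  forall x, x \in L -> (0 < x.1 <= n)%N /\ (0 < x.2 <= m)%N.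

Lemma fl_agree n m i j f g : (0 < i <= n)%N -> (0 < j <= m)%N ->
  agree n m f g -> agree n m (fl i j f) (fl i j g).
Proof.
move=> Hi Hj H p q Hp Hq; rewrite /fl.
case: ifP => [/andP[i2 j2]|_].
  rewrite (H i.-1 j) ?(H i j.-1) ?(H i.-1 j.-1) ?(H i j) ?(H p q) //; lia.
case: ifP => [/andP[i2 /eqP j1]|_].
  rewrite (H i.-1 1%N) ?(H i 1%N) ?(H p q) //; lia.
case: ifP => [/andP[/eqP i1 j2]|_].
  rewrite (H 1%N j.-1) ?(H 1%N j) ?(H p q) //; lia.
exact: H.
Qed.

Lemma appl_agree n m L f g : inbox n m L -> agree n m f g ->
  agree n m (appl fl L f) (appl fl L g).
Proof.
elim: L f g => [|x L IH] f g //= HL H.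
apply: IH; first by move=> y Hy; apply: HL; rewrite inE Hy orbT.
have [H1 H2] := HL x (mem_head _ _).
exact: fl_agree.
Qed.

Lemma ent_appl n m (X : 'M[R]_(n, m)) L f : inbox n m L -> agree n m (ent X) f ->
  agree n m (ent (appl (@lmove R n m) L X)) (appl fl L f).
Proof.
elim: L X f => [|x L IH] X f //= HL H.
apply: IH; first by move=> y Hy; apply: HL; rewrite inE Hy orbT.
have [H1 H2] := HL x (mem_head _ _).
move=> p q Hp Hq; rewrite ent_lmove //; by apply: (fl_agree H1 H2 H).
Qed.

Lemma appl_frame L f p q :
  (forall x, x \in L -> ~~ ((p == x.1) && (q == x.2)) && ~~ ((p == x.1.-1) && (q == x.2.-1))) ->
  appl fl L f p q = f p q.
Proof.
elim: L f => [|x L IH] f //= H.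
rewrite /appl /= -/(appl fl L _) IH; last by move=> y Hy; apply: H; rewrite inE Hy orbT.
by case/andP: (H x (mem_head _ _)) => h1 h2; rewrite fl_frame.
Qed.

Definition posb n m (f : fn) := forall p q, (0 < p <= n)%N -> (0 < q <= m)%N -> 0 < f p q.

Lemma fl_pos n m i j f : (0 < i <= n)%N -> (0 < j <= m)%N -> posb n m f -> posb n m (fl i j f).
Proof.
move=> Hi Hj H p q Hp Hq; rewrite /fl.
case: ifP => [/andP[i2 j2]|_].
  have h1 := H i.-1 j ltac:(lia) ltac:(lia).
  have h2 := H i j.-1 ltac:(lia) ltac:(lia).
  have h3 := H i.-1 j.-1 ltac:(lia) ltac:(lia).
  have h4 := H i j ltac:(lia) ltac:(lia).
  case: ifP => _; first by rewrite divr_gt0 ?mulr_gt0 ?addr_gt0 ?mulr_gt0.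
  by case: ifP => _; [rewrite mulr_gt0 ?addr_gt0 | exact: H].
case: ifP => [/andP[i2 /eqP j1]|_].
  case: ifP => _; last exact: H.
  by rewrite mulr_gt0 // H //; lia.
case: ifP => [/andP[/eqP i1 j2]|_]; last exact: H.
case: ifP => _; last exact: H.
by rewrite mulr_gt0 // H //; lia.
Qed.

Lemma appl_pos n m L f : inbox n m L -> posb n m f -> posb n m (appl fl L f).
Proof.
elim: L f => [|x L IH] f //= HL H.
apply: IH; first by move=> y Hy; apply: HL; rewrite inE Hy orbT.
have [H1 H2] := HL x (mem_head _ _).
exact: fl_pos.
Qed.

Definition Lab (n m : nat) : seq (nat * nat * nat) :=
  flatten [seq flatten [seq [seq (i, k, c) | c <- iota 1 (m - k)] | k <- iota 0 (minn i m)]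
          | i <- iota 1 n].
Definition mv (x : nat * nat * nat) := ((x.1.1 - x.1.2)%N, x.2).
Definition lt3 (x y : nat * nat * nat) : bool :=
  (x.1.1 < y.1.1)%N || (x.1.1 == y.1.1) && ((x.1.2 < y.1.2)%N || (x.1.2 == y.1.2) && (x.2 < y.2)%N).
Definition psi (x : nat * nat * nat) := ((x.2 + x.1.2)%N, x.1.2, (x.1.1 - x.1.2)%N).
Definition r2 (x y : nat * nat * nat) := lt3 (psi x) (psi y).

Lemma mT_Lab n m : mT n m = map mv (Lab n m).
Proof.
rewrite /mT /Lab map_flatten -map_comp; congr flatten; apply: eq_map => i /=.
rewrite /mR map_flatten -map_comp; congr flatten; apply: eq_map => k /=.
by rewrite /mpi -map_comp.
Qed.

Lemma mem_Lab n m i k c :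
  ((i, k, c) \in Lab n m) = [&& (0 < i <= n)%N, (k < minn i m)%N & (0 < c <= m - k)%N].
Proof.
apply/idP/idP.
  case/flattenP => l /mapP[i' Hi' ->] /flattenP[l' /mapP[k' Hk' ->]] /mapP[c' Hc' [-> -> ->]].
  move: Hi' Hk' Hc'; rewrite !mem_iota; lia.
case/and3P => Hi Hk Hc; apply/flattenP; exists (flatten [seq [seq (i, k0, c0) | c0 <- iota 1 (m - k0)] | k0 <- iota 0 (minn i m)]).
  by apply/mapP; exists i => //; rewrite mem_iota; lia.
apply/flattenP; exists [seq (i, k, c0) | c0 <- iota 1 (m - k)].
  by apply/mapP; exists k => //; rewrite mem_iota; lia.
by apply/mapP; exists c => //; rewrite mem_iota; lia.
Qed.

Lemma lt3_trans : transitive lt3.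
Proof. move=> y x z; rewrite /lt3; lia. Qed.
Lemma lt3_irr : irreflexive lt3.
Proof. move=> x; rewrite /lt3; lia. Qed.
Lemma r2_trans : transitive r2.
Proof. move=> y x z; rewrite /r2; exact: lt3_trans. Qed.
Lemma r2_irr : irreflexive r2.
Proof. move=> x; rewrite /r2; exact: lt3_irr. Qed.

Lemma sorted_Lab n m : sorted lt3 (Lab n m).
Proof.
apply: (@sorted_flattenX _ _ ltn); [exact: ltn_trans|exact: iota_ltn_sorted| |].
  move=> i _; apply: (@sorted_flattenX _ _ ltn); [exact: ltn_trans|exact: iota_ltn_sorted| |].
    move=> k _; rewrite sorted_map; apply: sub_sorted (iota_ltn_sorted _ _).
    by move=> a b /=; rewrite /lt3 /=; lia.
  move=> k k' kk' x y /mapP[c _ ->] /mapP[c' _ ->]; rewrite /lt3 /=; lia.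
move=> i i' ii' x y /flattenP[l /mapP[k _ ->] /mapP[c _ ->]].
move=> /flattenP[l' /mapP[k' _ ->] /mapP[c' _ ->]]; rewrite /lt3 /=; lia.
Qed.

Lemma uniq_Lab n m : uniq (Lab n m).
Proof. exact: (@sorted_uniq _ lt3 lt3_trans lt3_irr _ (sorted_Lab n m)). Qed.

Lemma psiK_Lab n m x : x \in Lab n m -> psi (psi x) = x.
Proof.
case: x => [[i k] c]; rewrite mem_Lab /psi /= => H.
congr (_, _, _); lia.
Qed.

Lemma sorted_psi m n : sorted r2 (map psi (Lab m n)).
Proof.
rewrite sorted_map; apply: (@sub_in_sorted _ (mem (Lab m n)) lt3).
- by move=> x y Hx Hy; rewrite /relpre /r2 /= !(psiK_Lab Hx) !(psiK_Lab Hy).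
- by apply/allP.
- exact: sorted_Lab.
Qed.

Lemma perm_Lab n m : perm_eq (Lab n m) (map psi (Lab m n)).
Proof.
apply: uniq_perm; first exact: uniq_Lab.
  exact: (sorted_uniq r2_trans r2_irr (sorted_psi m n)).
case=> [[i k] c]; apply/idP/idP.
  move=> H; apply/mapP; exists (psi (i, k, c)); last by rewrite (psiK_Lab H).
  move: H; rewrite /psi /= !mem_Lab; lia.
case/mapP=> [[[i' k'] c']]; rewrite mem_Lab /psi /= => H [-> -> ->].
rewrite mem_Lab; lia.
Qed.

Lemma dep_Lab n m : {in Lab n m &, forall x y,
   depm (mv x).1 (mv x).2 (mv y).1 (mv y).2 -> lt3 x y -> r2 x y}.
Proof.
case=> [[i k] c] [[i' k'] c']; rewrite !mem_Lab /mv /r2 /psi /lt3 /depm /= => H1 H2.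
lia.
Qed.

Lemma flip_appl L f : flipF (appl fl L f) = appl fl (map (fun x => (x.2, x.1)) L) (flipF f).
Proof.
elim: L f => [|x L IH] f //=.
by rewrite /appl /= -/(appl fl L _) -/(appl fl _ _) IH flip_fl.
Qed.

Lemma flipK (f : fn) : flipF (flipF f) = f. Proof. by []. Qed.

Lemma gT_transpose n m f : appl fl (mT n m) f = flipF (appl fl (mT m n) (flipF f)).
Proof.
rewrite flip_appl flipK !mT_Lab.
have -> : [seq (x.2, x.1) | x <- [seq mv i | i <- Lab m n]] = map mv (map psi (Lab m n)).
  rewrite -!map_comp; apply: eq_map => x /=; rewrite /mv /psi /=; congr (_, _); lia.
rewrite /appl [LHS]foldl_mapX [RHS]foldl_mapX.
apply: (@foldl_trace _ _ (fun x a => fl (mv x).1 (mv x).2 a)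
   (fun x y => depm (mv x).1 (mv x).2 (mv y).1 (mv y).2) lt3 r2).
- case=> [[i k] c] [[i' k'] c']; rewrite !mem_Lab /mv /= => H1 H2 nd a.
  apply: fl_comm => //; lia.
- exact: lt3_trans.
- exact: r2_trans.
- exact: r2_irr.
- exact: sorted_Lab.
- exact: sorted_psi.
- exact: (sorted_uniq r2_trans r2_irr (sorted_psi m n)).
- exact: perm_Lab.
- exact: dep_Lab.
Qed.

End F.
Arguments fl {R} i j f p q.
Arguments flipF {R} f p q.
Arguments agree {R} n m f g.
Arguments posb {R} n m f.

Section S.
Variable R : realFieldType.

Lemma mT_S n m : mT n.+1 m = mT n m ++ mR m n.+1.
Proof. by rewrite /mT -(addn1 n) iotaD map_cat flatten_cat /= cats0 addnC. Qed.

Lemma mem_mpi i j x : x \in mpi i j -> x.1 = i /\ (0 < x.2 <= j)%N.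
Proof. by case/mapP => c; rewrite mem_iota => Hc ->; split => //=; lia. Qed.

Lemma mem_mR m i x : x \in mR m i ->
  exists k c, [/\ (k < minn i m)%N, (0 < c <= m - k)%N & x = ((i - k)%N, c)].
Proof.
case/flattenP => l /mapP[k Hk ->] /mapP[c Hc ->].
by exists k, c; move: Hk Hc; rewrite !mem_iota; split => //; lia.
Qed.

Lemma mem_mT n m x : x \in mT n m ->
  exists i k c, [/\ (0 < i <= n)%N, (k < minn i m)%N, (0 < c <= m - k)%N & x = ((i - k)%N, c)].
Proof.
case/flattenP => l /mapP[i Hi ->] /mem_mR [k [c [H1 H2 ->]]].
by exists i, k, c; move: Hi; rewrite mem_iota; split => //; lia.
Qed.

Lemma inbox_mT n' n m : (n' <= n)%N -> inbox n m (mT n' m).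
Proof. by move=> H x /mem_mT[i [k [c [H1 H2 H3 ->]]]] /=; lia. Qed.

Lemma inbox_mR n m i : (i <= n)%N -> inbox n m (mR m i).
Proof. by move=> H x /mem_mR[k [c [H2 H3 ->]]] /=; lia. Qed.

End S.

Section Struct.
Variable R : realFieldType.
Variable n : nat.
Variable f : fn R.
Hypothesis n2 : (2 <= n)%N.
Hypothesis fsym : flipF f = f.
Hypothesis fpos : posb n n f.

Definition Gf := appl fl (mT n.-1 n) f.
Definition Tp := appl fl (mT n.-1 n.-1) f.
Definition Tf := appl fl (mT n n) f.

Lemma fsymp p q : f p q = f q p.
Proof. by rewrite -{1}fsym. Qed.

Lemma Tf_sym p q : Tf p q = Tf q p.
Proof. by have E := gT_transpose n n f; rewrite fsym in E; rewrite /Tf {1}E. Qed.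

Lemma Gf_flip : Gf = flipF (appl fl (mT n n.-1) f).
Proof. by have E := gT_transpose n.-1 n f; rewrite fsym in E; rewrite /Gf {1}E. Qed.

Lemma nS : n = n.-1.+1. Proof. lia. Qed.

Lemma Tf_G : Tf = appl fl (mR n n) Gf.
Proof. by rewrite /Tf {1}nS mT_S -nS appl_cat. Qed.

Lemma Gf_pos : posb n n Gf.
Proof. apply: appl_pos fpos; apply: inbox_mT; lia. Qed.

Lemma Gf_rown q : Gf n q = f n q.
Proof.
apply: appl_frame => x /mem_mT[i [k [c [H1 H2 H3 ->]]]] /=; lia.
Qed.

Lemma Gf_diag p : (0 < p <= n.-1)%N -> Gf p p = Tp p p.
Proof.
move=> Hp; rewrite Gf_flip /flipF {1}nS mT_S -nS appl_cat -/Tp.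
apply: appl_frame => x /mem_mR[k [c [H2 H3 ->]]] /=; lia.
Qed.

Definition Bs j := flatten [seq mpi (n - k) (n - k) | k <- iota 0 j].
Definition B j := appl fl (Bs j) Gf.

Lemma mem_Brange a l x : x \in flatten [seq mpi (n - k) (n - k) | k <- iota a l] ->
  exists k c, [/\ (a <= k < a + l)%N, (0 < c <= n - k)%N & x = ((n - k)%N, c)].
Proof.
case/flattenP => s /mapP[k Hk ->] /mapP[c Hc ->].
by exists k, c; move: Hk Hc; rewrite !mem_iota; split => //; lia.
Qed.

Lemma Tf_B : Tf = B n.
Proof. by rewrite Tf_G /B /Bs /mR minnn. Qed.

Lemma Bs_split j : (j <= n)%N ->
  Bs n = Bs j ++ flatten [seq mpi (n - k) (n - k) | k <- iota j (n - j)].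
Proof.
move=> Hj; have E : iota 0 n = iota 0 j ++ iota j (n - j) by rewrite -iotaD subnKC.
by rewrite /Bs E map_cat flatten_cat.
Qed.

Lemma Bs_S j : Bs j.+1 = Bs j ++ mpi (n - j) (n - j).
Proof. by rewrite /Bs -(addn1 j) iotaD map_cat flatten_cat /= cats0. Qed.

Lemma F1 j p q : (p < q)%N -> B j p q = Gf p q.
Proof.
move=> H; apply: appl_frame => x /mem_Brange[k [c [H1 H2 ->]]] /=; lia.
Qed.

Lemma F2 j p q : (j <= n)%N -> (n - j < p)%N -> Tf p q = B j p q.
Proof.
move=> Hj Hp; rewrite Tf_B /B (Bs_split Hj) appl_cat.
apply: appl_frame => x /mem_Brange[k [c [H1 H2 ->]]] /=; lia.
Qed.

Lemma F3 j p q : (p < n - j)%N -> B j p q = Gf p q.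
Proof.
move=> Hp; apply: appl_frame => x /mem_Brange[k [c [H1 H2 ->]]] /=; lia.
Qed.

Lemma mpi_split r : (0 < r)%N -> mpi r r = mpi r r.-1 ++ [:: (r, r)].
Proof.
case: r => // r _ /=.
by rewrite /mpi -[in iota 1 r.+1](addn1 r) iotaD map_cat /= add1n.
Qed.

Definition H j := appl fl (mpi (n - j) (n - j).-1) (B j).

Lemma B_S j : (j < n)%N -> B j.+1 = fl (n - j) (n - j) (H j).
Proof.
by move=> Hj; rewrite /B Bs_S appl_cat (mpi_split (_ : 0 < n - j)%N) ?appl_cat; last lia.
Qed.

Lemma H_frame j p q : ~~ ((p == (n - j)%N) && (q < n - j)%N) -> ~~ ((p == (n - j - 1)%N) && (q < n - j - 1)%N) ->
  H j p q = B j p q.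
Proof.
move=> h1 h2; apply: appl_frame => x /mem_mpi[/= -> Hx]; lia.
Qed.

Lemma K r : (0 < r <= n.-1)%N -> B (n - r) r r = Gf r r.+1 / (2 * Gf r r).
Proof.
move=> Hr; set j := (n - r - 1)%N.
have E : (n - r = j.+1)%N by rewrite /j; lia.
have Enj : (n - j = r.+1)%N by rewrite /j; lia.
have h1 : H j r r.+1 = Gf r r.+1.
  by rewrite H_frame ?F1 //; rewrite Enj; lia.
have h2 : H j r r = Gf r r.
  by rewrite H_frame ?F3 //; rewrite Enj; lia.
have h3 : H j r.+1 r = Gf r r.+1.
  have : Tf r.+1 r = B j.+1 r.+1 r by apply: F2; lia.
  rewrite B_S; last lia.
  rewrite Enj fl_frame; last 2 first.
  - by apply/negP => /andP[_ /eqP]; lia.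
  - by apply/negP => /andP[/eqP]; lia.
  by move <-; rewrite Tf_sym Tf_B F1.
have p1 : 0 < Gf r r.+1 by apply: Gf_pos; lia.
have p2 : 0 < Gf r r by apply: Gf_pos; lia.
rewrite E B_S; last lia.
rewrite Enj /fl /=.
have c1 : (2 <= r.+1)%N by lia.
rewrite c1 !eqxx /= h1 h2 h3.
field; by rewrite !lt0r_neq0 // ?addr_gt0 // mulr_gt0.
Qed.

Lemma Tdiag r : (2 <= r <= n)%N -> Tf r r = B (n - r) r r * (2 * Gf r.-1 r).
Proof.
move=> Hr; set j := (n - r)%N.
have Enj : (n - j = r)%N by rewrite /j; lia.
have h1 : H j r r = B j r r.
  by rewrite H_frame //; rewrite Enj; lia.
have h2 : H j r.-1 r = Gf r.-1 r.
  by rewrite H_frame ?F1 //; try lia; rewrite Enj; lia.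
have h3 : H j r r.-1 = Gf r.-1 r.
  have : Tf r r.-1 = B j.+1 r r.-1 by apply: F2; rewrite /j; lia.
  rewrite B_S; last by rewrite /j; lia.
  rewrite Enj fl_frame; last 2 first.
  - by apply/negP => /andP[_ /eqP]; lia.
  - by apply/negP => /andP[/eqP]; lia.
  by move <-; rewrite Tf_sym Tf_B F1 //; lia.
have -> : Tf r r = B j.+1 r r by apply: F2; rewrite /j; lia.
rewrite B_S; last by rewrite /j; lia.
rewrite Enj /fl.
have c1 : ((2 <= r)%N && (2 <= r)%N) = true by lia.
have c2 : (r == r.-1) = false by lia.
rewrite c1 c2 /= eqxx /= h1 h2 h3.
ring.
Qed.

Lemma Tf_upper i j : (i < j)%N -> Tf i j = Gf i j.
Proof. by move=> H; rewrite Tf_B F1. Qed.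

Lemma Tf_11 : Tf 1 1 = Gf 1 2 / (2 * Gf 1 1).
Proof.
have E : B n = B (n - 1).+1 by congr B; lia.
have E1 : (n - (n - 1) = 1)%N by lia.
rewrite Tf_B E B_S; last lia.
rewrite E1 /fl /= /H E1 /= /appl /=.
have E2 : (n - 1 = n - 1)%N by [].
by rewrite (K (r:=1)) //; lia.
Qed.

Lemma Tf_mid i : (2 <= i <= n.-1)%N -> Tf i i = Gf i i.+1 * Gf i.-1 i / Gf i i.
Proof.
move=> Hi; rewrite Tdiag; last lia.
rewrite K; last lia.
have p2 : 0 < Gf i i by apply: Gf_pos; lia.
field; by rewrite lt0r_neq0.
Qed.

Lemma Tf_nn : Tf n n = 2 * Gf n.-1 n * f n n.
Proof.
rewrite Tdiag; last lia.
rewrite subnn /B /Bs /= /appl /= Gf_rown; ring.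
Qed.

End Struct.

Section M.
Variable R : realFieldType.

Lemma ent_tr n m (M : 'M[R]_(n, m)) p q : ent M^T p q = ent M q p.
Proof.
rewrite /ent /get.
case: (ltnP p.-1 m) => Ha; case: (ltnP q.-1 n) => Hb.
- rewrite (insubT (fun k => k < m)%N Ha) (insubT (fun k => k < n)%N Hb) mxE.
  by congr (M _ _); apply: val_inj.
- have Hb' : (q.-1 < n)%N = false by lia.
  by rewrite (insubT (fun k => k < m)%N Ha) !(@insubF _ (fun k => (k < n)%N) _ q.-1 Hb').
- have Ha' : (p.-1 < m)%N = false by lia.
  by rewrite (insubT (fun k => k < n)%N Hb) !(@insubF _ (fun k => (k < m)%N) _ p.-1 Ha').
- have Hb' : (q.-1 < n)%N = false by lia.
  have Ha' : (p.-1 < m)%N = false by lia.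
  by rewrite !(@insubF _ (fun k => (k < m)%N) _ p.-1 Ha') !(@insubF _ (fun k => (k < n)%N) _ q.-1 Hb').
Qed.

Lemma ent_ul n m p q (X : 'M[R]_(n, m)) a b : (0 < a <= p)%N -> (0 < b <= q)%N ->
  ent (ulblock p q X) a b = ent X a b.
Proof.
move=> Ha Hb; have Ha' : (a.-1 < p)%N by lia.
have Hb' : (b.-1 < q)%N by lia.
by rewrite (entE _ Ha' Hb') mxE.
Qed.

Lemma ent_stack p q p' (A : 'M[R]_(p, q)) r a b : (0 < a <= p')%N -> (0 < b <= q)%N ->
  ent (stack_row p' A r) a b = if (a <= p)%N then ent A a b else r b.
Proof.
move=> Ha Hb; have Ha' : (a.-1 < p')%N by lia.
have Hb' : (b.-1 < q)%N by lia.
rewrite (entE _ Ha' Hb') mxE /=.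
have -> : (a.-1 < p)%N = (a <= p)%N by lia.
by rewrite (prednK (_ : 0 < b)%N) //; lia.
Qed.

Lemma gR_appl n m i (X : 'M[R]_(n, m)) : gR i X = appl (@lmove R n m) (mR m i) X.
Proof.
rewrite /gR /appl /mR foldl_flattenX; apply: eq_foldl_aux => Z k.
by rewrite /gpi /mpi foldl_mapX.
Qed.

Lemma mx_ent_eq n m (X Y : 'M[R]_(n, m)) :
  (forall p q, (0 < p <= n)%N -> (0 < q <= m)%N -> ent X p q = ent Y p q) -> X = Y.
Proof.
move=> H; apply/matrixP => a b.
have Ha : ((a : nat).+1.-1 < n)%N by rewrite /= ltn_ord.
have Hb : ((b : nat).+1.-1 < m)%N by rewrite /= ltn_ord.
have := H (a : nat).+1 (b : nat).+1 ltac:(have := ltn_ord a; lia) ltac:(have := ltn_ord b; lia).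
rewrite (entE _ Ha Hb) (entE _ Ha Hb).
have -> : Ordinal Ha = a by apply: val_inj.
by have -> : Ordinal Hb = b by apply: val_inj.
Qed.

End M.

Section A.
Variable R : realFieldType.

Fixpoint alt (t : nat -> R) (k : nat) : R := if k is k'.+1 then t k'.+1 / alt t k' else 1.

Lemma eq_alt t t' k : (forall p, (0 < p <= k)%N -> t p = t' p) -> alt t k = alt t' k.
Proof.
elim: k => [|k IH] //= H; rewrite H; last lia.
by rewrite IH // => p Hp; apply: H; lia.
Qed.

Lemma alt_pos t k : (forall p, (0 < p <= k)%N -> 0 < t p) -> 0 < alt t k.
Proof.
elim: k => [|k IH] //= H; apply: divr_gt0; first by apply: H; lia.
by apply: IH => p Hp; apply: H; lia.
Qed.

Definition Pp (t : nat -> R) k := \prod_(0 <= j < ((k - 1)./2).+1) t (k - 2 * j)%N.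
Definition Qp (t : nat -> R) k := \prod_(0 <= j < k./2) t (k - 1 - 2 * j)%N.

Lemma Pp_S t k : Pp t k.+1 = t k.+1 * Qp t k.
Proof.
rewrite /Pp /Qp big_nat_recl // subn1 /= muln0 subn0; congr (_ * _).
by apply: eq_big_nat => j Hj; congr t; lia.
Qed.

Lemma Qp_S t k : (1 <= k)%N -> Qp t k.+1 = Pp t k.
Proof.
move=> Hk; rewrite /Pp /Qp.
have -> : (k.+1./2 = ((k - 1)./2).+1)%N by lia.
by apply: eq_big_nat => j Hj; congr t; lia.
Qed.

Lemma alt_prod t n : (1 <= n)%N -> Pp t n / Qp t n = alt t n.
Proof.
elim: n => [|n IH] // _.
case: (posnP n) => [->|n0].
  by rewrite /Pp /Qp /= big_nat1 big_geq.
rewrite Pp_S Qp_S // /= -IH // invf_div; by rewrite mulrA.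
Qed.

Lemma odd_prod (F : nat -> R) n :
  \prod_(0 <= j < (n.+1)./2) F (2 * j).+1 = \prod_(1 <= i < n.+1 | odd i) F i.
Proof.
rewrite [RHS]big_mkcond.
elim: n => [|n IH]; first by rewrite !big_geq.
rewrite [RHS]big_nat_recr // -IH.
case: (boolP (odd n.+1)) => Ho.
  have -> : ((n.+2)./2 = (n.+1)./2.+1)%N by move: Ho; lia.
  rewrite [LHS]big_nat_recr //; congr (_ * F _); move: Ho; lia.
have -> : ((n.+2)./2 = (n.+1)./2)%N by move: Ho; lia.
by rewrite Monoid.mulm1.
Qed.

Lemma even_prod (F : nat -> R) n :
  \prod_(0 <= j < n./2) F (2 * j).+2 = \prod_(1 <= i < n.+1 | ~~ odd i) F i.
Proof.
rewrite [RHS]big_mkcond.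
elim: n => [|n IH]; first by rewrite !big_geq.
rewrite [RHS]big_nat_recr // -IH.
case: (boolP (odd n.+1)) => Ho.
  have -> : ((n.+1)./2 = n./2)%N by move: Ho; lia.
  by rewrite Monoid.mulm1.
have -> : ((n.+1)./2 = (n./2).+1)%N by move: Ho; lia.
rewrite [LHS]big_nat_recr //; congr (_ * F _); move: Ho; lia.
Qed.

End A.

Section Main.
Variable R : realFieldType.

Lemma ent_sym n (W : 'M[R]_n) : W^T = W -> flipF (ent W) = ent W.
Proof.
move=> Ws; apply: functional_extensionality => p; apply: functional_extensionality => q.
by rewrite /flipF -[in RHS]Ws ent_tr.
Qed.

Lemma ent_pos n (W : 'M[R]_n) : (forall i j, 0 < W i j) -> posb n n (ent W).
Proof.
move=> Wp p q Hp Hq; have Hp' : (p.-1 < n)%N by lia.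
have Hq' : (q.-1 < n)%N by lia.
by rewrite (entE _ Hp' Hq').
Qed.

Lemma gT_agree n (W : 'M[R]_n) : agree n n (ent (gT W)) (Tf n (ent W)).
Proof. by rewrite gT_appl; apply: ent_appl; [apply: inbox_mT|]. Qed.

Lemma ul_props n (W : 'M[R]_n.+1) : (forall i j, 0 < W i j) -> W^T = W ->
  (forall i j, 0 < (ulblock n n W) i j) /\ (ulblock n n W)^T = ulblock n n W.
Proof.
move=> Wp Ws; split.
  move=> i j; rewrite mxE.
  have Hi : ((i : nat).+1.-1 < n.+1)%N by have := ltn_ord i; rewrite /=; lia.
  have Hj : ((j : nat).+1.-1 < n.+1)%N by have := ltn_ord j; rewrite /=; lia.
  by have := entE W Hi Hj; rewrite /ent /= => ->.
apply/matrixP => i j; rewrite !mxE.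
have := ent_sym Ws => /(congr1 (fun g => g (j : nat).+1 (i : nat).+1)).
by rewrite /flipF /ent /=.
Qed.

Lemma partb n : forall (W : 'M[R]_n), (forall i j, 0 < W i j) -> W^T = W -> (1 <= n)%N ->
  alt (fun p => ent (gT W) p p) n = 4 ^+ (n./2) * \prod_(1 <= i < n.+1) ent W i i.
Proof.
elim: n => [|n IH] W Wp Ws Hn //.
set f := ent W.
have fsym : flipF f = f by apply: ent_sym.
have fpos : posb n.+1 n.+1 f by apply: ent_pos.
have TA := gT_agree W.
case: (posnP n) => [n0|n0].
  subst n; rewrite /= TA // /Tf /mT /mR /mpi /= /appl /= /fl /=.
  by rewrite big_nat1 expr0 mul1r divr1.
have N2 : (2 <= n.+1)%N by lia.
have [Wp' Ws'] := ul_props Wp Ws.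
have IHW := IH _ Wp' Ws' n0.
rewrite (eq_alt (t' := fun p => Tf n.+1 f p p)); last by move=> p Hp; rewrite TA.
set W' := ulblock n n W in IHW.
have TA' : agree n n (ent (gT W')) (Tp n.+1 f).
  rewrite gT_appl; apply: ent_appl; first by apply: inbox_mT.
  by move=> p q Hp Hq; rewrite ent_ul.
have GA : alt (fun p => Gf n.+1 f p p) n = 4 ^+ n./2 * \prod_(1 <= i < n.+1) f i i.
  rewrite (eq_alt (t' := fun p => ent (gT W') p p)); last first.
    by move=> p Hp; rewrite Gf_diag // TA' //; lia.
  rewrite IHW; congr (_ * _); apply: eq_big_nat => i Hi; rewrite ent_ul //; lia.
have Gp := Gf_pos N2 fpos.
pose c k : R := if odd k then 2^-1 else 2.
have C : forall k, (1 <= k <= n)%N -> alt (fun p => Tf n.+1 f p p) k =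
    Gf n.+1 f k k.+1 * c k / alt (fun p => Gf n.+1 f p p) k.
  elim => [|k IHk] // Hk.
  have gk1 : 0 < Gf n.+1 f k.+1 k.+1 by apply: Gp; lia.
  case: (posnP k) => [k0|k0].
    subst k; rewrite /= Tf_11 // /c /=.
    by field; rewrite lt0r_neq0.
  rewrite [LHS]/= [alt (fun p => Gf _ _ p p) k.+1]/= IHk; last lia.
  rewrite Tf_mid //; last lia.
  have gk : 0 < Gf n.+1 f k k.+1 by apply: Gp; lia.
  have gk2 : 0 < Gf n.+1 f k.+1 k.+2 by apply: Gp; lia.
  have A0 : 0 < alt (fun p => Gf n.+1 f p p) k by apply: alt_pos => p Hp; apply: Gp; lia.
  rewrite /c /=; case: (odd k) => /=.
    by field; rewrite !lt0r_neq0.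
  by field; rewrite !lt0r_neq0.
rewrite [LHS]/= C; last lia.
rewrite Tf_nn // GA [in RHS]big_nat_recr //.
have Gn : 0 < Gf n.+1 f n n.+1 by apply: Gp; lia.
have Pp : 0 < \prod_(1 <= i < n.+1) f i i.
  rewrite big_nat_cond; apply: prodr_gt0 => i /andP[/andP[H1 H2] _]; apply: fpos; lia.
rewrite /c; case: (boolP (odd n)) => Ho.
  have -> : (n.+1./2 = (n./2).+1)%N by move: Ho; lia.
  by rewrite exprS /=; field; rewrite expf_neq0 ?pnatr_eq0 // !lt0r_neq0.
have -> : (n.+1./2 = n./2)%N by move: Ho; lia.
rewrite /=; field; by rewrite expf_neq0 ?pnatr_eq0 // !lt0r_neq0.
Qed.

End Main.

Unset Implicit Arguments. Set Strict Implicit. Set Printing Implicit Defensive.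

Theorem lemma5p1 (R : realFieldType) (n : nat) (W : 'M[R]_n)
  (Wpos : forall i j, 0 < W i j) (Wsym : W^T = W) :
  let w := ent W in
  let t := ent (gT W) in
  (* S = [ R^{n,n-1}_n ( T^{n-1,n-1}(W_{n-1,n-1}) ; w_{1n} ... w_{n-1,n} ) ]^t *)
  let S : 'M[R]_(n.-1, n) :=
    (gR n (stack_row n (gT (ulblock n.-1 n.-1 W)) (fun j => w j n)))^T in
  ((2 <= n)%N ->
     [/\ gT W = gR n (stack_row n S (fun j => w j n)),
         (forall i j, (1 <= i)%N -> (i < j)%N -> (j <= n)%N -> t i j = ent S i j),
         t 1%N 1%N = ent S 1%N 2%N / (2 * ent S 1%N 1%N),
         (forall i, (2 <= i)%N -> (i <= n.-1)%N ->
            t i i = ent S i i.+1 * ent S i.-1 i / ent S i i)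
       & t n n = 2 * ent S n.-1 n * w n n])
  /\
  ((1 <= n)%N ->
     (4 ^+ (n./2) * \prod_(1 <= i < n.+1) w i i
       = (\prod_(0 <= j < ((n - 1)./2).+1) t (n - 2 * j)%N (n - 2 * j)%N)
         / (\prod_(0 <= j < n./2) t (n - 1 - 2 * j)%N (n - 1 - 2 * j)%N))
     /\
     ((\prod_(0 <= j < ((n - 1)./2).+1) t (n - 2 * j)%N (n - 2 * j)%N)
         / (\prod_(0 <= j < n./2) t (n - 1 - 2 * j)%N (n - 1 - 2 * j)%N)
       = (\prod_(1 <= i < n.+1 | odd i) zshape W i)
         / (\prod_(1 <= i < n.+1 | ~~ odd i) zshape W i))).
Proof.
move=> w t S.
have fsym : flipF w = w by apply: ent_sym.
have fpos : posb n n w by apply: ent_pos.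
have TA := gT_agree W.
split.
  move=> n2.
  set W' := ulblock n.-1 n.-1 W.
  set Y := stack_row n (gT W') (fun j => w j n).
  have TA' : agree n.-1 n.-1 (ent (gT W')) (Tp n w).
    rewrite gT_appl; apply: ent_appl; first by apply: inbox_mT.
    by move=> p q Hp Hq; rewrite ent_ul.
  have Tp_rown : forall q, Tp n w n q = w n q.
    move=> q; apply: appl_frame => x /mem_mT[i [k [c [H1 H2 H3 ->]]]] /=; lia.
  have YA : agree n n.-1 (ent Y) (Tp n w).
    move=> a b Ha Hb; rewrite ent_stack //.
    case: ifP => Han; first by rewrite TA' //; lia.
    have -> : a = n by lia.
    by rewrite Tp_rown -[in RHS]fsym.
  have SG : forall p q, (0 < p <= n.-1)%N -> (0 < q <= n)%N -> ent S p q = Gf n w p q.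
    have IB : inbox n n.-1 (mR n.-1 n) by apply: inbox_mR.
    move=> p q Hp Hq; rewrite /S ent_tr gR_appl.
    rewrite (ent_appl IB (fun a b _ _ => erefl)) //; try lia.
    rewrite (appl_agree IB YA) //; try lia.
    have E : forall k m, (0 < k)%N -> mT k m = mT k.-1 m ++ mR m k.
      by case=> // k m _; exact: mT_S.
    by rewrite (Gf_flip _ fsym) /flipF E ?appl_cat //; lia.
  have ZG : agree n n (ent (stack_row n S (fun j => w j n))) (Gf n w).
    move=> p q Hp Hq; rewrite ent_stack //.
    case: ifP => Hpn; first by rewrite SG //; lia.
    have -> : p = n by lia.
    by rewrite Gf_rown // -[in LHS]fsym.
  split.
  - apply: mx_ent_eq => p q Hp Hq.
    rewrite TA // Tf_G // gR_appl.
    have IB : inbox n n (mR n n) by apply: inbox_mR.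
    by rewrite (ent_appl IB ZG).
  - move=> i j H1 H2 H3; rewrite /t TA; try lia.
    by rewrite Tf_upper // SG //; lia.
  - rewrite /t TA; try lia.
    by rewrite Tf_11 // !SG //; lia.
  - move=> i H1 H2; rewrite /t TA; try lia.
    rewrite Tf_mid //; last lia.
    by rewrite !SG //; lia.
  - rewrite /t TA; try lia.
    by rewrite Tf_nn // SG //; lia.
move=> n1; split.
  have := alt_prod (fun p => t p p) n1; rewrite /Pp /Qp => ->.
  by rewrite /t partb.
congr (_ / _).
  rewrite -odd_prod.
  have -> : (n.+1./2 = ((n - 1)./2).+1)%N by lia.
  apply: eq_big_nat => j Hj; rewrite /zshape; congr (ent _ _ _); lia.
rewrite -even_prod.
apply: eq_big_nat => j Hj; rewrite /zshape; congr (ent _ _ _); lia.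
Qed.
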